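(* In the setting of MP (two-stage mini-pooling) with quantitative assays subject to multiplicative measurement error, the sensitivity of MP satisfies $\mathrm{SENS}_{\mathrm{IND}}^2\le\mathrm{SENS}_{\mathrm{MP}}\le\mathrm{SENS}_{\mathrm{IND}}$, where: for cutoff $C>0$ and pool size $K\ge2$, individuals have true values $V_j\ge0$ (failure iff $V_j>C$) and measured values $\widetilde V_j=V_j\varepsilon_j$, the pool has measured total $\widetilde T_1=\varepsilon_{\mathrm{pool}}\sum_{j=1}^KV_j$, the errors $\varepsilon_1,\dots,\varepsilon_K,\varepsilon_{\mathrm{pool}}$ are i.i.d. with $\varepsilon\overset{d}{=}\varepsilon^{-1}$ and independent of the $V$'s; $\mathrm{SENS}_{\mathrm{IND}}=\Pr(\widetilde V_k>C\mid V_k>C)$ and $\mathrm{SENS}_{\mathrm{MP}}=\Pr(\widetilde T_1>C,\ \widetilde V_k>C\mid V_k>C)$.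
   Context: MP classifies individual $k$ positive iff the pool is positive ($\widetilde T_1>C$, i.e. measured pool value exceeds $C/K$) and the individual's own measured value exceeds $C$. Values $V_j$ are nonnegative. *)

(* Defs.v *)
From HB Require Import structures.
From mathcomp Require Import all_boot all_order all_algebra.
From mathcomp Require Import all_classical all_reals all_analysis.
Set Implicit Arguments. Unset Strict Implicit. Unset Printing Implicit Defensive.
Import Order.TTheory GRing.Theory Num.Theory.
Local Open Scope classical_set_scope.
Local Open Scope ring_scope.

Definition cprob d (T : measurableType d) (R : realType) (P : probability T R)
  (A B : set T) : R := fine (P (A `&` B)) / fine (P B).

(* Joint independence of the random vector (V_1,...,V_K) from the errors
   eps_1,...,eps_K, eps_pool, together with mutual independence of the errors:
   product rule on all measurable rectangles (these form a pi-system generating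
   the relevant sigma-algebras). *)
Definition MP_independent d (T : measurableType d) (R : realType)
  (P : probability T R) (K : nat) (V eps : 'I_K -> T -> R) (epsp : T -> R) :=
  forall (A B : 'I_K -> set R) (Bp : set R),
    (forall j, measurable (A j)) -> (forall i, measurable (B i)) -> measurable Bp ->
    P ((\bigcap_j (V j @^-1` A j)) `&` (\bigcap_i (eps i @^-1` B i)) `&` (epsp @^-1` Bp))
    = (P (\bigcap_j (V j @^-1` A j)) * (\prod_(i < K) P (eps i @^-1` B i))
       * P (epsp @^-1` Bp))%E.

Definition same_law d (T : measurableType d) (R : realType) (P : probability T R)
  (X Y : T -> R) := forall B : set R, measurable B -> P (X @^-1` B) = P (Y @^-1` B).

(* Main.v *)
Require Import Defs.
From HB Require Import structures.
From mathcomp Require Import all_boot all_order all_algebra.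
From mathcomp Require Import all_classical all_reals all_analysis.
From mathcomp Require Import ring lra.
Import Order.TTheory GRing.Theory Num.Theory.
Local Open Scope classical_set_scope.
Local Open Scope ring_scope.
Lemma mlt d (T : measurableType d) (R : realType) (f g : T -> R) :
  measurable_fun setT f -> measurable_fun setT g -> measurable [set t | f t < g t].
Proof.
move=> mf mg.
have := measurable_realfun.measurable_fun_ltr mf mg measurableT (Y := [set true]) I.
by rewrite setTI preimage_true.
Qed.
Lemma mle d (T : measurableType d) (R : realType) (f g : T -> R) :
  measurable_fun setT f -> measurable_fun setT g -> measurable [set t | f t <= g t].
Proof.
move=> mf mg.
have := measurable_realfun.measurable_fun_ler mf mg measurableT (Y := [set true]) I.
by rewrite setTI preimage_true.
Qed.
Lemma mpre d (T : measurableType d) (R : realType) (f : T -> R) (S : set R) :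
  measurable_fun setT f -> measurable S -> measurable (f @^-1` S).
Proof. by move=> mf mS; have := mf measurableT S mS; rewrite setTI. Qed.
Arguments mpre {d T R f S}.
Arguments mlt {d T R f g}.
Arguments mle {d T R f g}.
Section pr.
Context d (T : measurableType d) (R : realType) (P : probability T R).
Definition pr (A : set T) : R := fine (P A).
Lemma prE A : measurable A -> P A = (pr A)%:E.
Proof. by move=> mA; rewrite /pr fineK // fin_num_measure. Qed.
Lemma pr_ge0 A : 0 <= pr A.
Proof. by rewrite /pr fine_ge0. Qed.
Lemma pr_le A B : measurable A -> measurable B -> A `<=` B -> pr A <= pr B.
Proof.
move=> mA mB AB; rewrite -lee_fin -!prE //; apply: le_measure => //; by rewrite inE.
Qed.
End pr.
Arguments pr {d T R} P A.
Arguments prE {d T R} P A.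
Arguments pr_ge0 {d T R} P A.
Arguments pr_le {d T R} P A B.
Lemma cs (R : realFieldType) n (p G : 'I_n -> R) : (forall j, 0 <= p j) ->
  (\sum_j p j * G j)^+2 <= (\sum_j p j) * (\sum_j p j * G j ^+ 2).
Proof.
move=> p0.
set S0 := \sum_j p j; set S1 := \sum_j p j * G j; set S2 := \sum_j p j * G j ^+ 2.
have key m : 0 <= S2 - 2 * m * S1 + m ^+ 2 * S0.
  have -> : S2 - 2 * m * S1 + m ^+ 2 * S0 = \sum_j p j * (G j - m) ^+ 2.
    rewrite /S2 /S1 /S0 mulr_sumr mulr_sumr -sumrN -!big_split /=.
    by apply: eq_bigr => j _; ring.
  by apply: sumr_ge0 => j _; rewrite mulr_ge0 // sqr_ge0.
have S0ge : 0 <= S0 by apply: sumr_ge0.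
case: (eqVneq S0 0) => [S00|S0n].
  have pj0 : forall j, p j = 0.
    by move=> j; move/eqP: S00; rewrite psumr_eq0 // => /allP/(_ j (mem_index_enum _)) /eqP.
  have -> : S1 = 0 by rewrite /S1 big1 // => j _; rewrite pj0 mul0r.
  by rewrite S00 expr0n /= mul0r.
have S0p : 0 < S0 by rewrite lt_def S0n.
have := key (S1 / S0).
have -> : S2 - 2 * (S1 / S0) * S1 + (S1 / S0) ^+ 2 * S0 = (S0 * S2 - S1 ^+ 2) / S0.
  by field.
by rewrite pmulr_lge0 ?invr_gt0 // subr_ge0.
Qed.
Lemma bigU_sub (T : Type) N (F : 'I_N -> set T) (A : set T) :
  (forall j, F j `<=` A) -> \big[setU/set0]_(j < N) F j `<=` A.
Proof.
move=> H; apply: (big_ind (fun U => U `<=` A)) => //.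
by move=> X Y HX HY t [/HX|/HY].
Qed.
Lemma sub_bigU (T : Type) N (F : 'I_N -> set T) j :
  F j `<=` \big[setU/set0]_(i < N) F i.
Proof. by rewrite (bigD1 j) //=; exact: subsetUl. Qed.

Lemma grid d (T : measurableType d) (R : realType) (P : probability T R)
  (f ek ep : T -> R) (C : R) (n : nat) :
  measurable_fun setT f -> measurable_fun setT ek -> measurable_fun setT ep ->
  0 < C ->
  (forall S B Bp, measurable S -> measurable B -> measurable Bp ->
     P (f @^-1` S `&` ek @^-1` B `&` ep @^-1` Bp) =
     (P (f @^-1` S) * P (ek @^-1` B) * P (ep @^-1` Bp))%E) ->
  (forall B, measurable B -> P (ek @^-1` B) = P (ep @^-1` B)) ->
  pr P ([set t | C < f t * ek t] `&` [set t | C < f t]) <=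
    Num.sqrt (pr P [set t | C < f t] *
       pr P ([set t | C < f t * ep t /\ C < f t * ek t] `&` [set t | C < f t]))
    + pr P ([set t | C < f t * ek t] `&` [set t | n.+1%:R * (f t * ek t - C) <= f t]).
Proof.
move=> mf mek mep C0 HI HL.
set N := n.+1.
have N0 : 0 < N%:R :> R by rewrite ltr0n.
pose S (j : 'I_N) : set R := [set v | C < v] `&` [set v | j%:R * v <= C * N%:R]
   `&` [set v | C * N%:R < j.+1%:R * v].
pose Tj (j : 'I_N) : set R := [set x | j.+1%:R < N%:R * x].
have mS j : measurable (S j).
  apply: measurableI; first apply: measurableI.
  - by apply: mlt.
  - by apply: mle => //; apply: measurable_realfun.measurable_funM.
  - by apply: mlt => //; apply: measurable_realfun.measurable_funM.
have mT j : measurable (Tj j).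
  by apply: mlt => //; apply: measurable_realfun.measurable_funM.
have Sdisj i j v : S i v -> S j v -> i = j.
  move=> [[h1 h2] h3] [[h4 h5] h6]; apply: val_inj => /=.
  have v0 : 0 < v by apply: lt_trans h1.
  have a1 : i%:R * v < j.+1%:R * v by apply: le_lt_trans h2 h6.
  have a2 : j%:R * v < i.+1%:R * v by apply: le_lt_trans h5 h3.
  rewrite ltr_pM2r // ltr_nat ltnS in a1.
  rewrite ltr_pM2r // ltr_nat ltnS in a2.
  by apply/eqP; rewrite eqn_leq a1 a2.
pose X j := f @^-1` S j `&` ek @^-1` Tj j `&` ep @^-1` setT.
pose Y j := f @^-1` S j `&` ek @^-1` Tj j `&` ep @^-1` Tj j.
pose Z j := f @^-1` S j.
have mZ j : measurable (Z j) by apply: mpre.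
have mX j : measurable (X j).
  by apply: measurableI; [apply: measurableI|]; apply: mpre.
have mY j : measurable (Y j).
  by apply: measurableI; [apply: measurableI|]; apply: mpre.
pose p j := pr P (Z j).
pose g j := pr P (ep @^-1` Tj j).
have PX j : P (X j) = (p j * g j)%:E.
  rewrite HI // HL // preimage_setT probability_setT mule1.
  by rewrite (prE P _ (mZ j)) (prE P _ (mpre mep (mT j))).
have PY j : P (Y j) = (p j * g j ^+ 2)%:E.
  rewrite HI // HL // (prE P _ (mZ j)) (prE P _ (mpre mep (mT j))).
  by rewrite -!EFinM -mulrA -expr2.
have tX : trivIset setT X.
  by move=> i j _ _ [t [[[Si _] _] [[Sj _] _]]]; apply: Sdisj Si Sj.
have tY : trivIset setT Y.
  by move=> i j _ _ [t [[[Si _] _] [[Sj _] _]]]; apply: Sdisj Si Sj.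
have tZ : trivIset setT Z.
  by move=> i j _ _ [t [Si Sj]]; apply: Sdisj Si Sj.
set G := \big[setU/set0]_(j < N) X j.
set G2 := \big[setU/set0]_(j < N) Y j.
set ZZ := \big[setU/set0]_(j < N) Z j.
have mG : measurable G by apply: bigsetU_measurable.
have mG2 : measurable G2 by apply: bigsetU_measurable.
have mZZ : measurable ZZ by apply: bigsetU_measurable.
have prG : pr P G = \sum_j p j * g j.
  rewrite /pr /G measure_semi_additive_ord //.
  by rewrite (eq_bigr _ (fun j _ => PX j)) sumEFin.
have prG2 : pr P G2 = \sum_j p j * g j ^+ 2.
  rewrite /pr /G2 measure_semi_additive_ord //.
  by rewrite (eq_bigr _ (fun j _ => PY j)) sumEFin.
have prZ : pr P ZZ = \sum_j p j.
  rewrite /pr /ZZ measure_semi_additive_ord //.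
  by rewrite (eq_bigr _ (fun j _ => prE P _ (mZ j))) sumEFin.
have mA : measurable [set t | C < f t] by apply: mlt.
have mfe : measurable_fun setT (fun t => f t * ek t).
  exact: measurable_realfun.measurable_funM.
have mfp : measurable_fun setT (fun t => f t * ep t).
  exact: measurable_realfun.measurable_funM.
have mE : measurable ([set t | C < f t * ek t] `&` [set t | C < f t]).
  by apply: measurableI => //; apply: mlt.
have mM : measurable ([set t | C < f t * ep t /\ C < f t * ek t] `&` [set t | C < f t]).
  by apply: measurableI => //; apply: measurableI; apply: mlt.
have mD : measurable ([set t | C < f t * ek t] `&` [set t | n.+1%:R * (f t * ek t - C) <= f t]).
  apply: measurableI; first exact: mlt.
  apply: mle => //; apply: measurable_realfun.measurable_funM => //.
  by apply: measurable_realfun.measurable_funB.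
have key (x : R) j t : S j (f t) -> j.+1%:R < N%:R * x -> C < f t * x.
  move=> [[h1 _] h3] h4.
  have f0 : 0 < f t by apply: lt_trans h1.
  have h5 : j.+1%:R * f t < N%:R * x * f t by rewrite ltr_pM2r.
  have : C * N%:R < (f t * x) * N%:R.
    by apply: lt_trans h3 _; rewrite (mulrC (f t)) (mulrC _ N%:R) mulrA.
  by rewrite ltr_pM2r.
have GE : G `<=` [set t | C < f t * ek t] `&` [set t | C < f t].
  apply: bigU_sub => j t [[Sj Tt] _]; split; first exact: key Sj Tt.
  by case: Sj => [[]].
have G2M : G2 `<=` [set t | C < f t * ep t /\ C < f t * ek t] `&` [set t | C < f t].
  apply: bigU_sub => j t [[Sj Tt] Tp]; split; first split.
  - exact: key Sj Tp.
  - exact: key Sj Tt.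
  - by case: Sj => [[]].
have ZA : ZZ `<=` [set t | C < f t].
  by apply: bigU_sub => j t [[]].
have ED : [set t | C < f t * ek t] `&` [set t | C < f t] `<=`
    G `|` ([set t | C < f t * ek t] `&` [set t | n.+1%:R * (f t * ek t - C) <= f t]).
  move=> t [h1 h2].
  have f0 : 0 < f t by apply: lt_trans h2.
  have x0 : 0 <= C * N%:R / f t by apply: divr_ge0; [apply: mulr_ge0; apply: ltW | apply: ltW].
  have jN : (Num.trunc (C * N%:R / f t) < N)%N.
    rewrite /N ltnS truncn_le_nat ltr_pdivrMr // [C * _]mulrC ltr_pM2l.
    - exact: h2.
    - by rewrite ltr0n.
  pose j := Ordinal jN.
  have Sj : S j (f t).
    split; first split => //=.
    - have := truncn_le (C * N%:R / f t); rewrite x0 ler_pdivlMr //.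
    - have := truncnS_gt (C * N%:R / f t); rewrite ltr_pdivrMr //.
  have [Tt|Tn] := ltP (j.+1%:R : R) (N%:R * ek t).
    by left; apply: (@sub_bigU _ N X j t).
  right; split => //=.
  move: Sj => [[_ h5] _].
  rewrite /= in h5 Tn.
  have H6 : N%:R * ek t * f t <= j.+1%:R * f t by rewrite ler_pM2r.
  rewrite -natr1 mulrDl mul1r in H6.
  have h5b : (j%:R : R) * f t <= C * N%:R := h5.
  have -> : n.+1%:R * (f t * ek t - C) = N%:R * ek t * f t - C * N%:R by rewrite /N; ring.
  lra.
have step1 : pr P ([set t | C < f t * ek t] `&` [set t | C < f t]) <= pr P G +
   pr P ([set t | C < f t * ek t] `&` [set t | n.+1%:R * (f t * ek t - C) <= f t]).
  rewrite -lee_fin EFinD -!prE //.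
  apply: le_trans; first by apply: le_measure ED; rewrite inE //; apply: measurableU.
  exact: measureU2.
apply: le_trans step1 _; rewrite lerD2r.
have G0 : 0 <= pr P G by apply: pr_ge0.
rewrite -(ger0_norm G0) -sqrtr_sqr; apply: ler_wsqrtr.
rewrite prG.
apply: le_trans; first by apply: cs => j; apply: pr_ge0.
rewrite -prG2 -prZ.
apply: ler_pM; [exact: pr_ge0 | exact: pr_ge0 | |].
- by apply: pr_le.
- by apply: pr_le.
Qed.
Lemma indep3 d (T : measurableType d) (R : realType)
  (P : probability T R) (K : nat) (V eps : 'I_K -> T -> R) (epsp : T -> R) (k : 'I_K)
  (S B Bp : set R) :
  MP_independent P V eps epsp -> measurable S -> measurable B -> measurable Bp ->
  P (V k @^-1` S `&` eps k @^-1` B `&` epsp @^-1` Bp) =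
  (P (V k @^-1` S) * P (eps k @^-1` B) * P (epsp @^-1` Bp))%E.
Proof.
move=> HI mS mB mBp.
have := HI (fun j => if j == k then S else setT) (fun i => if i == k then B else setT) Bp.
have E1 : \bigcap_j (V j @^-1` (if j == k then S else setT)) = V k @^-1` S.
  apply/seteqP; split=> x /=.
    by move=> /(_ k I); rewrite eqxx.
  by move=> Sx j _; case: eqP => [->|].
have E2 : \bigcap_j (eps j @^-1` (if j == k then B else setT)) = eps k @^-1` B.
  apply/seteqP; split=> x /=.
    by move=> /(_ k I); rewrite eqxx.
  by move=> Sx j _; case: eqP => [->|].
rewrite E1 E2 => ->; last 3 first.
- by move=> j; case: eqP.
- by move=> j; case: eqP.
- done.
congr (_ * _ * _)%E.
rewrite (bigD1 k) //= eqxx big1 ?mule1 // => i /negbTE ->.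
by rewrite preimage_setT probability_setT.
Qed.
Lemma Dlim d (T : measurableType d) (R : realType) (P : probability T R)
  (f g : T -> R) (C : R) :
  measurable_fun setT f -> measurable_fun setT g ->
  forall e : R, 0 < e -> exists n : nat,
   pr P ([set t | C < f t * g t] `&` [set t | n.+1%:R * (f t * g t - C) <= f t]) < e.
Proof.
move=> mf mg e e0.
pose D (n : nat) := [set t | C < f t * g t] `&` [set t | n.+1%:R * (f t * g t - C) <= f t].
have mfg : measurable_fun setT (fun t => f t * g t) by exact: measurable_realfun.measurable_funM.
have mD n : measurable (D n).
  apply: measurableI; first exact: mlt.
  apply: mle => //; apply: measurable_realfun.measurable_funM => //; apply: measurable_realfun.measurable_funB => //.
have DE : \bigcap_n D n = set0.
  apply/seteqP; split=> t // Dt.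
  have [h1 _] := Dt 0%N I.
  have x0 : 0 < f t * g t - C by rewrite subr_gt0.
  have [_ /=] := Dt (Num.trunc (f t / (f t * g t - C))) I.
  have := truncnS_gt (f t / (f t * g t - C)).
  rewrite ltr_pdivrMr // => h2 h3.
  by have := lt_le_trans h2 h3; rewrite ltxx.
have := @nonincreasing_cvg_mu _ _ _ P D.
rewrite DE measure0 => /(_ _ mD) H.
have /fine_cvgP[_ H2] : (P \o D) @ \oo --> 0%E.
  apply: H => //.
  - rewrite /= (prE P _ (mD 0%N)) ltry //.
  - move=> m n mn; apply/subsetPset => t [h1 h2]; split => //=.
    apply: le_trans h2; apply: ler_wpM2r; first by rewrite subr_ge0 ltW.
    by rewrite ler_nat.
have := (cvgrPdist_lt _ _).1 H2 e e0.
move=> [N _ HN]; exists N.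
have := HN N (leqnn N); rewrite /= sub0r normrN ger0_norm //.
exact: pr_ge0.
Qed.

Theorem mainTheorem6 (d : measure_display) (T : measurableType d) (R : realType)
  (P : probability T R) (K : nat) (C : R)
  (V eps : 'I_K -> T -> R) (epsp : T -> R) (k : 'I_K) :
  (2 <= K)%N -> 0 < C ->
  (forall j, measurable_fun setT (V j)) ->
  (forall i, measurable_fun setT (eps i)) ->
  measurable_fun setT epsp ->
  (forall j t, 0 <= V j t) ->
  (forall i t, 0 < eps i t) -> (forall t, 0 < epsp t) ->
  MP_independent P V eps epsp ->
  (forall i, same_law P (eps i) epsp) ->
  same_law P epsp (fun t => (epsp t)^-1) ->
  (0 < P [set t | (C < V k t)%R])%E ->
  let SENS_IND := cprob P [set t | C < V k t * eps k t] [set t | C < V k t] in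
  let SENS_MP := cprob P
      [set t | C < epsp t * (\sum_(j < K) V j t) /\ C < V k t * eps k t]
      [set t | C < V k t] in
  SENS_IND ^+ 2 <= SENS_MP <= SENS_IND.
Proof.
move=> K2 C0 mV me mp V0 e0 p0 HI HL _ PA; cbv zeta.
have HI' := @indep3 _ _ _ P K V eps epsp k.
have mA : measurable [set t | C < V k t] by apply: mlt.
have mfe : measurable_fun setT (fun t => V k t * eps k t).
  exact: measurable_realfun.measurable_funM.
have mfp : measurable_fun setT (fun t => V k t * epsp t).
  exact: measurable_realfun.measurable_funM.
have mSum : measurable_fun setT (fun t => epsp t * \sum_(j < K) V j t).
  apply: measurable_realfun.measurable_funM => //.
  exact: measurable_sum.
have mE : measurable ([set t | C < V k t * eps k t] `&` [set t | C < V k t]).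
  by apply: measurableI => //; apply: mlt.
have mM : measurable ([set t | C < epsp t * (\sum_(j < K) V j t) /\ C < V k t * eps k t]
    `&` [set t | C < V k t]).
  by apply: measurableI => //; apply: measurableI; apply: mlt.
have mM' : measurable ([set t | C < V k t * epsp t /\ C < V k t * eps k t]
    `&` [set t | C < V k t]).
  by apply: measurableI => //; apply: measurableI; apply: mlt.
have a0 : 0 < pr P [set t | C < V k t].
  by move: PA; rewrite (prE P _ mA) lte_fin.
have M'M : pr P ([set t | C < V k t * epsp t /\ C < V k t * eps k t] `&` [set t | C < V k t])
  <= pr P ([set t | C < epsp t * (\sum_(j < K) V j t) /\ C < V k t * eps k t]
    `&` [set t | C < V k t]).
  apply: pr_le => // t [[h1 h2] h3]; split => //; split => //.
  apply: lt_le_trans h1 _; rewrite mulrC ler_pM2l //.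
  rewrite (bigD1 k) //= lerDl; exact: sumr_ge0.
have ME : pr P ([set t | C < epsp t * (\sum_(j < K) V j t) /\ C < V k t * eps k t]
    `&` [set t | C < V k t]) <= pr P ([set t | C < V k t * eps k t] `&` [set t | C < V k t]).
  by apply: pr_le => // t [[h1 h2] h3].
have Esq : pr P ([set t | C < V k t * eps k t] `&` [set t | C < V k t]) <=
    Num.sqrt (pr P [set t | C < V k t] *
       pr P ([set t | C < V k t * epsp t /\ C < V k t * eps k t] `&` [set t | C < V k t])).
  apply/ler_addgt0Pr => e e0'.
  have [n Hn] := @Dlim _ _ _ P (V k) (eps k) C (mV k) (me k) e e0'.
  apply: le_trans; first exact: (@grid _ _ _ P (V k) (eps k) epsp C n (mV k) (me k) mp C0
     (fun S B Bp mS mB mBp => HI' S B Bp HI mS mB mBp) (HL k)).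
  by rewrite lerD2l ltW.
set a := pr P [set t | C < V k t] in a0 Esq.
set x := pr P ([set t | C < V k t * eps k t] `&` [set t | C < V k t]) in Esq ME.
set m := pr P ([set t | C < epsp t * (\sum_(j < K) V j t) /\ C < V k t * eps k t]
    `&` [set t | C < V k t]) in M'M ME.
set m' := pr P ([set t | C < V k t * epsp t /\ C < V k t * eps k t] `&` [set t | C < V k t]) in M'M Esq.
have x0 : 0 <= x by apply: pr_ge0.
have m'0 : 0 <= m' by apply: pr_ge0.
have x2 : x ^+ 2 <= a * m.
  apply: le_trans (_ : a * m' <= _); last by rewrite ler_wpM2l // ltW.
  rewrite -(@sqr_sqrtr _ (a * m')); last by rewrite mulr_ge0 // ltW.
  rewrite !expr2; apply: ler_pM => //.
change (((x / a) ^+ 2 <= m / a) && (m / a <= x / a)).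
apply/andP; split.
  have -> : (x / a) ^+ 2 = (x ^+ 2 / a) / a by rewrite expr_div_n expr2 invfM mulrA.
  apply: ler_wpM2r; first by rewrite invr_ge0 ltW.
  by rewrite ler_pdivrMr // mulrC.
by apply: ler_wpM2r; first by rewrite invr_ge0 ltW.
Qed.
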